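(* Let $\mathcal{I}=\{(i\mid A_i): i\in[m]\}$ be an index coding instance with $|A|_{\min}=\min_i|A_i|$, and let $\boldsymbol{G}\in\{0,1\}^{r\times m}$ be the binary matrix obtained at the end of any execution of the UMCD algorithm on $\mathcal{I}$, with row supports $G_j=\{i: g_{j,i}=1\}$. Then $\boldsymbol{G}$ satisfies the linear code condition with $d=|A|_{\min}+1$, i.e. $\bigl|\bigcup_{j\in K}G_j\bigr|\ge |A|_{\min}+|K|$ for every nonempty $K\subseteq[r]$.
   Context: $B_i=[m]\setminus(A_i\cup\{i\})$. For a $0/1$ matrix $\boldsymbol{G}$, $\boldsymbol{G}_{[k]}^{L}$ is the submatrix of the first $k$ rows and columns $L$; $\mathrm{mcm}(\boldsymbol{G})$ is the maximum number of $1$-entries no two in a common row or column (0 if no columns). UMCD algorithm: $N=[m]$, $k=0$; while $N\ne\emptyset$: $k\leftarrow k+1$; pick $w\in N$ with $|A_w|$ minimal over $N$ (arbitrary tie-breaking); set row $k$ of $\boldsymbol{G}$ to the indicator vector of $\{w\}\cup A_w$; remove $w$ from $N$; remove from $N$ every $i$ with $\mathrm{mcm}(\boldsymbol{G}_{[k]}^{\{i\}\cup B_i})=\mathrm{mcm}(\boldsymbol{G}_{[k]}^{B_i})+1$. The final matrix has $r$ rows, $r$ being the final value of $k$. *)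

(* Defs.v *)
From mathcomp Require Import all_boot.
Set Implicit Arguments. Unset Strict Implicit. Unset Printing Implicit Defensive.

Section UMCD.
Variable m : nat.

(* Index coding instance: user i demands x_i and has side information A i. *)
Definition index_coding_instance (A : 'I_m -> {set 'I_m}) : Prop :=
  forall i, i \notin A i.

(* |A|_min = min_i |A_i|  (m is used as a neutral upper bound; |A_i| < m). *)
Definition Amin (A : 'I_m -> {set 'I_m}) : nat := \big[minn/m]_(i : 'I_m) #|A i|.

Definition Bset (A : 'I_m -> {set 'I_m}) (i : 'I_m) : {set 'I_m} :=
  ~: (i |: A i).

(* A 0/1 matrix with m columns is represented by the list of its row supports. *)
Definition is_matching (rows : seq {set 'I_m}) (L : {set 'I_m})
    (M : {set 'I_(size rows) * 'I_m}) : bool :=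
  [forall p in M, (p.2 \in L) && (p.2 \in nth set0 rows p.1)] &&
  [forall p in M, forall q in M, ((p.1 == q.1) || (p.2 == q.2)) ==> (p == q)].

Definition mcm (rows : seq {set 'I_m}) (L : {set 'I_m}) : nat :=
  \max_(M : {set 'I_(size rows) * 'I_m} | is_matching L M) #|M|.

(* Row of G produced when w is picked: indicator of {w} u A_w. *)
Definition G_rows (A : 'I_m -> {set 'I_m}) (ws : seq 'I_m) : seq {set 'I_m} :=
  map (fun w => w |: A w) ws.

(* The set N after k iterations, for the sequence ws of picked users. *)
Fixpoint Nset (A : 'I_m -> {set 'I_m}) (ws : seq 'I_m) (k : nat) : {set 'I_m} :=
  match k with
  | 0 => setT
  | k'.+1 =>
    match drop k' ws with
    | w :: _ =>
        let R := G_rows A (take k ws) in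
        (Nset A ws k' :\ w) :\:
          [set i | mcm R (i |: Bset A i) == (mcm R (Bset A i)).+1]
    | [::] => Nset A ws k'
    end
  end.

Definition umcd_run (A : 'I_m -> {set 'I_m}) (ws : seq 'I_m) : Prop :=
  (forall k w s, drop k ws = w :: s ->
     w \in Nset A ws k /\ (forall v, v \in Nset A ws k -> #|A w| <= #|A v|)) /\
  Nset A ws (size ws) = set0.

End UMCD.

(* Main.v *)
Require Import Defs.
From mathcomp Require Import all_boot.
From mathcomp Require Import zify.
Set Implicit Arguments. Unset Strict Implicit. Unset Printing Implicit Defensive.

Lemma ar1 a b n : a - b < n.+1 -> b.+1 <= a -> a - b.+1 < n. Proof. lia. Qed.
Lemma ar2 a b : a < b -> a.+1 < b.+1. Proof. lia. Qed.

Section Matching.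
Variable m : nat.
Variable rows : seq {set 'I_m}.
Local Notation T := ('I_(size rows) * 'I_m)%type.
Local Notation row j := (nth set0 rows j).

Lemma matchingP (L : {set 'I_m}) (M : {set T}) :
  reflect ((forall p, p \in M -> (p.2 \in L) && (p.2 \in row p.1)) /\
           (forall p q, p \in M -> q \in M -> (p.1 == q.1) || (p.2 == q.2) -> p = q))
          (is_matching L M).
Proof.
apply: (iffP andP) => [[/forallP H1 /forallP H2]|[H1 H2]]; split.
- by move=> p pM; have /implyP := H1 p; apply.
- move=> p q pM qM e; have /implyP/(_ pM)/forallP/(_ q)/implyP/(_ qM)/implyP/(_ e) := H2 p.
  by move/eqP.
- by apply/forallP => p; apply/implyP => /H1.
- apply/forallP => p; apply/implyP => pM; apply/forallP => q; apply/implyP => qM.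
  by apply/implyP => e; apply/eqP; apply: H2.
Qed.

Lemma mcm_ge L (M : {set T}) : is_matching L M -> #|M| <= mcm rows L.
Proof. by move=> H; apply: (leq_bigmax_cond (F := fun M : {set T} => #|M|)). Qed.

Lemma mcm_ex L : exists M : {set T}, is_matching L M /\ #|M| = mcm rows L.
Proof.
have h0 : 0 < #|[pred M : {set T} | is_matching L M]|.
  apply/card_gt0P; exists set0; rewrite inE; apply/matchingP; split=> p; by rewrite inE.
have [M HM e] := eq_bigmax_cond (fun M : {set T} => #|M|) h0.
by exists M; split; [move: HM; rewrite inE | rewrite /mcm e].
Qed.

Lemma mcm_le1 B w : mcm rows (w |: B) <= (mcm rows B).+1.
Proof.
have [M [/matchingP [H1 H2] <-]] := mcm_ex (w |: B).
set M' := [set p in M | p.2 != w].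
have hM' : is_matching B M'.
  apply/matchingP; split.
  - move=> p; rewrite inE => /andP [pM pw]; have /andP [] := H1 p pM.
    by rewrite in_setU1 (negbTE pw) /= => -> ->.
  - move=> p q; rewrite !inE => /andP [pM _] /andP [qM _]; exact: H2.
have := mcm_ge hM'.
rewrite -(cardsID [set p in M | p.2 != w] M) => h.
have : #|M :\: [set p in M | p.2 != w]| <= 1.
  apply/card_le1_eqP => p q; rewrite !inE => /andP [pn pM] /andP [qn qM].
  apply: H2 => //; move: pn qn; rewrite pM qM /= !negbK => /eqP -> /eqP ->.
  by rewrite eqxx orbT.
have -> : M :&: [set p in M | p.2 != w] = M' by apply/setP => p; rewrite !inE andbA andbb.
lia.
Qed.


Lemma augment (B C : {set 'I_m}) (w : 'I_m) (S : {set 'I_(size rows)}) :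
  w \notin B -> w \in C -> C \subset w |: B ->
  (forall j c, j \in S -> c \in row j -> c \in w |: B -> c \in C) ->
  (forall D : {set 'I_m}, D \subset C -> #|D| <= #|[set j in S | [exists c in D, c \in row j]]|) ->
  (mcm rows B).+1 <= mcm rows (w |: B).
Proof.
move=> wB wC CB hS hall.
have [M [/matchingP [M1 M2] <-]] := mcm_ex B.
pose good (Y : {set 'I_(size rows)}) (c : 'I_m) :=
  exists N : {set T}, [/\ is_matching (w |: B) N, #|N| = #|M|,
     (forall p, p \in N -> p.2 != c) &
     (forall j x, j \notin Y -> ((j, x) \in N) = ((j, x) \in M))].
suff: forall n (D : {set 'I_m}) (Y : {set 'I_(size rows)}), #|C| - #|D| < n ->
  w \in D -> D \subset C -> #|Y| < #|D| ->
  (forall j c, (j, c) \in M -> c \in D -> j \in Y) ->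
  (forall c, c \in D -> good Y c) ->
  exists N : {set T}, is_matching (w |: B) N /\ #|N| = #|M|.+1.
  move=> /(_ (#|C|.+1) [set w] set0) [].
  - by rewrite cards1; lia.
  - by rewrite inE.
  - by rewrite sub1set.
  - by rewrite cards1 cards0.
  - move=> j c /M1 /andP [cB _]; rewrite inE => /eqP ec; move: wB; by rewrite -ec cB.
  - move=> c; rewrite inE => /eqP ->; exists M; split => //.
    + apply/matchingP; split => //; move=> p /M1 /andP [pB ->]; by rewrite in_setU1 pB orbT.
    + move=> p /M1 /andP [pB _]; apply/eqP => e; by move: wB; rewrite -e pB.
  - by move=> N [hN <-]; apply: mcm_ge.
elim=> [|n IH] D Y; first by [].
move=> hn wD DC YD MY hgood.
case: (boolP [exists j in S, exists c in D, (c \in row j) && (j \notin Y)]); last first.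
  move=> hno; have := hall D DC.
  have : [set j in S | [exists c in D, c \in row j]] \subset Y.
    apply/subsetP => j; rewrite inE => /andP [jS /existsP [c /andP [cD cj]]].
    apply: contraR hno => jY; apply/existsP; exists j; rewrite jS /=.
    by apply/existsP; exists c; rewrite cD cj.
  move=> /subset_leq_card; lia.
move=> /existsP [j /andP [jS /existsP [c /andP [cD /andP [cj jY]]]]].
have cwB : c \in w |: B by apply: (subsetP CB); apply: (subsetP DC).
have [N [/matchingP [N1 N2] eN Nc NM]] := hgood c cD.
case: (pickP [pred x | (j, x) \in M]) => [c' /= jc'M | nom].
- have c'D : c' \notin D by apply: contra jY => c'D; apply: MY c'D.
  have /andP [c'B c'j] := M1 _ jc'M.
  have c'C : c' \in C by apply: hS c'j _ => //; rewrite in_setU1 c'B orbT.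
  have hD' : #|c' |: D| = #|D|.+1 by rewrite cardsU1 c'D.
  have hC : #|c' |: D| <= #|C| by apply: subset_leq_card; rewrite subUset sub1set c'C DC.
  apply: (IH (c' |: D) (j |: Y)).
  + move: hC; rewrite hD' => hC. have := ar1 hn hC. done.
  + by rewrite in_setU1 wD orbT.
  + by rewrite subUset sub1set c'C DC.
  + by rewrite cardsU1 jY hD'; apply: ar2.
  + move=> j2 c2 j2M; rewrite in_setU1 => /orP [/eqP e|c2D].
    * have := M2 _ _ j2M jc'M; rewrite /= e eqxx orbT => /(_ isT) [->]; by rewrite in_setU1 eqxx.
    * by rewrite in_setU1 (MY _ _ j2M c2D) orbT.
  + move=> d; rewrite in_setU1 => /orP [/eqP ->|dD].
    * have jc'N : (j, c') \in N by rewrite NM.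
      have hp : forall p, p \in N :\ (j, c') -> (p.1 != j) && (p.2 != c) && (p.2 != c').
        move=> p; rewrite in_setD1 => /andP [pne pN]; rewrite Nc //= andbT.
        apply/andP; split.
        - apply: contra pne => /eqP e; apply/eqP; apply: N2 => //; by rewrite e eqxx.
        - apply: contra pne => /eqP e; apply/eqP; apply: N2 => //; by rewrite e eqxx orbT.
      exists ((j, c) |: (N :\ (j, c'))); split.
      -- apply/matchingP; split.
         ++ move=> p; rewrite in_setU1 => /orP [/eqP ->|]; first by rewrite cwB cj.
            by rewrite in_setD1 => /andP [_ /N1].
         ++ move=> p q; rewrite !in_setU1 => /orP [/eqP ->|pN] /orP [/eqP ->|qN] //=.
            ** move: (hp q qN) => /andP [/andP [q1 q2] _].
               by rewrite eq_sym (negbTE q1) eq_sym (negbTE q2).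
            ** move: (hp p pN) => /andP [/andP [p1 p2] _].
               by rewrite (negbTE p1) (negbTE p2).
            ** move: pN qN; rewrite !in_setD1 => /andP [_ pN] /andP [_ qN]; exact: N2.
      -- have jcN : (j, c) \notin N :\ (j, c').
           by apply/negP => /hp /andP [/andP [] ]; rewrite eqxx.
         by rewrite cardsU1 jcN -eN (cardsD1 (j, c') N) jc'N.
      -- move=> p; rewrite in_setU1 => /orP [/eqP -> /=|/hp /andP [_ //]].
         by apply: contra c'D => /eqP <-.
      -- move=> j2 x; rewrite in_setU1 negb_or => /andP [j2j j2Y].
         rewrite in_setU1 in_setD1 -NM // xpair_eqE (negbTE j2j) /=.
         have -> : ((j2, x) == (j, c')) = false by rewrite xpair_eqE (negbTE j2j).
         done.
    * have [N' [h1 h2 h3 h4]] := hgood d dD; exists N'; split => //.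
      move=> j2 x; rewrite in_setU1 negb_or => /andP [_]; exact: h4.
- exists ((j, c) |: N); split.
  + apply/matchingP; split.
    * move=> p; rewrite in_setU1 => /orP [/eqP ->|/N1] //; by rewrite cwB cj.
    * have hp : forall p, p \in N -> (p.1 != j) && (p.2 != c).
        move=> p pN; rewrite Nc // andbT; apply/negP => /eqP e.
        have := nom p.2; rewrite /= -NM // -e.
        by case: p pN e => a b /= pN _; rewrite pN.
      move=> p q; rewrite !in_setU1 => /orP [/eqP ->|pN] /orP [/eqP ->|qN] //=.
      -- move: (hp q qN) => /andP [q1 q2].
         by rewrite eq_sym (negbTE q1) eq_sym (negbTE q2).
      -- move: (hp p pN) => /andP [p1 p2].
         by rewrite (negbTE p1) (negbTE p2).
      -- exact: N2.
  + by rewrite cardsU1 eN; have := Nc _ ; case: ((j, c) \in N) / boolP => // /Nc; rewrite eqxx.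
Qed.

End Matching.


Lemma arA x a u : x <= a -> a.+1 <= u -> x + 1 <= u. Proof. lia. Qed.
Lemma hA1 am aw uk kk c d x k2 : am <= aw -> uk < am + kk -> c + aw = uk -> d <= c ->
  x < d -> k2 + x + 1 = kk -> 0 < k2. Proof. lia. Qed.
Lemma hA2 k2 x kk n : k2 + x + 1 = kk -> kk <= n.+1 -> k2 <= n. Proof. lia. Qed.
Lemma hA3 am uk kk u2 d k2 x : uk < am + kk -> u2 + d <= uk -> am + k2 <= u2 ->
  k2 + x + 1 = kk -> d <= x. Proof. lia. Qed.

Lemma Amin_le m (A : 'I_m -> {set 'I_m}) i : Amin A <= #|A i|.
Proof.
rewrite /Amin; have : i \in index_enum 'I_m by rewrite mem_index_enum.
elim: (index_enum _) => //= a s IH; rewrite in_cons big_cons => /orP [/eqP <-|/IH h].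
  exact: geq_minl.
exact: leq_trans (geq_minr _ _) h.
Qed.

Theorem lemma3 (m : nat) (A : 'I_m -> {set 'I_m}) (ws : seq 'I_m) :
  index_coding_instance A ->
  umcd_run A ws ->
  forall K : {set 'I_(size ws)}, K != set0 ->
    Amin A + #|K| <= #|\bigcup_(j in K) nth set0 (G_rows A ws) j|.
Proof.
move=> hA [hrun _] K0 hK0; have /set0Pn [i0 _] := hK0.
pose w0 := tnth (in_tuple ws) i0.
pose G (i : 'I_(size ws)) := nth set0 (G_rows A ws) i.
have hG : forall i : 'I_(size ws), G i = nth w0 ws i |: A (nth w0 ws i).
  by move=> i; rewrite /G /G_rows (nth_map w0).
pose U (K : {set 'I_(size ws)}) := \bigcup_(j in K) G j.
have inU : forall (K : {set 'I_(size ws)}) i c, i \in K -> c \in G i -> c \in U K.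
  by move=> K i c iK cG; apply/bigcupP; exists i.
suff key : forall n (K : {set 'I_(size ws)}), #|K| <= n -> K != set0 -> Amin A + #|K| <= #|U K|.
  exact: key (leqnn _) hK0.
elim=> [|n IH] K.
  by rewrite leqn0 cards_eq0 => /eqP ->; rewrite eqxx.
move=> hKn /set0Pn [k0 k0K].
case: (arg_maxnP (fun i : 'I_(size ws) => val i) k0K) => k kK0 kmax.
have kK : k \in K := kK0.
set w := nth w0 ws k.
have wAw : w \notin A w := hA w.
have Gk : G k = w |: A w by rewrite hG.
have Aminw := Amin_le A w.
have GkU : G k \subset U K by apply: bigcup_sup.
have hKk : #|K| = (#|K :\ k|).+1 by rewrite (cardsD1 k K) kK.
case: (eqVneq (K :\ k) set0) => [K'0|K'n0].
  rewrite hKk K'0 cards0; apply: arA Aminw _.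
  by have := subset_leq_card GkU; rewrite Gk cardsU1 wAw.
rewrite leqNgt; apply/negP => hlt.
have ltk : forall i, i \in K :\ k -> val i < val k.
  move=> i; rewrite in_setD1 => /andP [ik iK].
  have := kmax i iK; rewrite /= leq_eqVlt => /orP [/eqP e|] //.
  by move: ik; rewrite (val_inj e) eqxx.
have [i1 i1K'] := set0Pn _ K'n0.
have hk0 : 0 < val k by apply: leq_ltn_trans (ltk _ i1K').
have hksz : val k < size ws := ltn_ord k.
have hNk : w \in Nset A ws k.
  by apply: (proj1 (hrun k w (drop k.+1 ws) _)); rewrite /w (drop_nth w0).
have hnrm : mcm (G_rows A (take k ws)) (w |: Bset A w) !=
            (mcm (G_rows A (take k ws)) (Bset A w)).+1.
  have hk0' : 0 < nat_of_ord k := hk0.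
  have hksz' : nat_of_ord k < size ws := hksz.
  move: hk0' hNk hksz'; case: (nat_of_ord k) => [//|k'] _ /= hNk hksz'.
  by move: hNk; rewrite (drop_nth w0) ?(ltnW hksz') // !inE => /and3P [].
pose R := G_rows A (take k ws).
have szR : size R = k by rewrite /R size_map size_takel // ltnW.
have nthR : forall j, j < k -> nth set0 R j = nth set0 (G_rows A ws) j.
  by move=> j hj; rewrite /R /G_rows map_take nth_take.
pose S := [set j : 'I_(size R) | [exists i in K :\ k, val i == val j]].
pose C := U K :\: A w.
have AwU : A w \subset U K by apply: subset_trans GkU; rewrite Gk subsetUr.
have wC : w \in C by rewrite inE wAw; apply: (subsetP GkU); rewrite Gk setU11.
have wB : w \notin Bset A w by rewrite /Bset in_setC setU11.
have CB : C \subset w |: Bset A w.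
  apply/subsetP => c; rewrite inE => /andP [cA _].
  by rewrite /Bset !in_setU1 in_setC in_setU1 negb_or cA andbT orbN.
have hS : forall (j : 'I_(size R)) c, j \in S -> c \in nth set0 R j -> c \in w |: Bset A w -> c \in C.
  move=> j c; rewrite inE => /existsP [i /andP [iK /eqP e]].
  rewrite nthR; last by rewrite -e; apply: ltk.
  rewrite -e => ci; rewrite /Bset in_setU1 in_setC in_setU1 negb_or => hc.
  rewrite inE (inU K i) ?andbT //; last by move: iK; rewrite in_setD1 => /andP [].
  case/orP: hc => [/eqP ->|/andP [_ //]]; exact: wAw.
have hall : forall D : {set 'I_m}, D \subset C ->
    #|D| <= #|[set j in S | [exists c in D, c \in nth set0 R j]]|.
  move=> D DC.
  pose X := [set i in K :\ k | [exists c in D, c \in G i]].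
  have XK : X \subset K :\ k by apply/subsetP => i; rewrite inE => /andP [].
  have DU : D \subset U K by apply: subset_trans DC _; apply: subsetDl.
  have step1 : #|D| <= #|X|.
    rewrite leqNgt; apply/negP => hxd.
    pose K2 := (K :\ k) :\: X.
    have cK2 : #|K2| + #|X| + 1 = #|K|.
      by rewrite /K2 (cardsDS XK) subnK ?addn1 -?hKk // subset_leq_card.
    have cC : #|C| + #|A w| = #|U K| by rewrite cardsDS // subnK // subset_leq_card.
    have dC : #|D| <= #|C| by apply: subset_leq_card.
    have k2pos := hA1 Aminw hlt cC dC hxd cK2.
    have k2n := hA2 cK2 hKn.
    have ih : Amin A + #|K2| <= #|U K2| by apply: IH k2n _; rewrite -card_gt0.
    have sub2 : U K2 \subset U K :\: D.
      apply/subsetP => c /bigcupP [i iK2 ci]; rewrite inE.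
      move: iK2; rewrite inE => /andP [iX iK'].
      rewrite (inU K i) ?andbT //; last by move: iK'; rewrite in_setD1 => /andP [].
      apply: contra iX => cD; rewrite inE iK' /=; apply/existsP; exists c; by rewrite cD.
    have u2 : #|U K2| + #|D| <= #|U K|.
      have := subset_leq_card sub2; rewrite (cardsDS DU) => h.
      by rewrite -(subnK (subset_leq_card DU)) leq_add2r.
    by have := hA3 hlt u2 ih cK2; rewrite leqNgt hxd.
  apply: leq_trans step1 _.
  have szR0 : 0 < size R by rewrite szR.
  pose j0 : 'I_(size R) := Ordinal szR0.
  pose g (i : 'I_(size ws)) : 'I_(size R) := insubd j0 (val i).
  have gv : forall i, i \in X -> val (g i) = val i.
    move=> i iX; rewrite /g insubdK // unfold_in szR; apply: ltk; exact: (subsetP XK).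
  rewrite -(card_in_imset (f := g)); last first.
    by move=> i1' i2' h1 h2 e; apply: val_inj; rewrite -(gv _ h1) -(gv _ h2) e.
  apply: subset_leq_card; apply/subsetP => j /imsetP [i iX ->].
  have iX' := iX; rewrite inE in iX'; case/andP: iX' => iK' /existsP [c /andP [cD ci]].
  rewrite inE; apply/andP; split.
    by rewrite inE; apply/existsP; exists i; rewrite iK' gv // eqxx.
  apply/existsP; exists c; rewrite cD /= gv // nthR //; exact: ltk.
apply: (negP hnrm); rewrite eqn_leq mcm_le1 /=.
exact: (augment wB wC CB hS hall).
Qed.
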